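(* Let $\beta\in(0,1)$, $\kappa>0$, and consider the uniform mesh $t_j=j\kappa$, $j=0,1,2,\dots$. Let $\Pi_1$ denote continuous piecewise linear interpolation at the nodes $t_j$ (i.e. $\Pi_1 v(t_j)=v(t_j)$ and $\Pi_1 v$ is linear on each $[t_j,t_{j+1}]$). Then there exists a constant $C$ depending only on $\beta$ such that for all $n\geq1$ \[ \int_0^{t_{n+1}}(t_{n+1}-\tau)^{\beta-1}\left|\Pi_1\tau^{1-\beta}-\tau^{1-\beta}\right|\,d\tau\leq C\kappa^{2-\beta}(t_{n+1}-\kappa)^{\beta-1}, \] where $\Pi_1\tau^{1-\beta}$ denotes the interpolant of the function $\tau\mapsto\tau^{1-\beta}$. *)

(* Defs.v *)
From HB Require Import structures.
From mathcomp Require Import all_boot all_order all_algebra.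
From mathcomp Require Import all_classical all_reals all_analysis.
Set Implicit Arguments. Unset Strict Implicit. Unset Printing Implicit Defensive.
Import Order.TTheory GRing.Theory Num.Theory.
Local Open Scope ring_scope.

Definition node {R : realType} (kappa : R) (j : nat) : R := j%:R * kappa.

Definition interp1 {R : realType} (kappa : R) (v : R -> R) (x : R) : R :=
  let tj := (Num.floor (x / kappa))%:~R * kappa in
  v tj + (x - tj) / kappa * (v (tj + kappa) - v tj).

(* Main.v *)
Require Import Defs.
Set Warnings "-notation-overridden -ambiguous-paths -notation-incompatible-prefix".
From HB Require Import structures.
From mathcomp Require Import all_boot all_order all_algebra.
From mathcomp Require Import all_classical all_reals all_analysis.
From mathcomp Require Import ring lra zify.
Import Order.TTheory GRing.Theory Num.Theory.
Local Open Scope classical_set_scope.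
Local Open Scope ring_scope.
Section S.
Variable R : realType.
Implicit Types r t x y : R.

Lemma bern1 r t : 0 < r < 1 -> 0 <= t -> t `^ r <= 1 + r * (t - 1).
Proof.
move=> /andP[r0 r1] t0.
have := @conjugate_powR R (t `^ r) 1 (r^-1) ((1 - r)^-1) (powR_ge0 _ _) ler01.
rewrite invr_gt0 r0 invr_gt0 subr_gt0 r1 !invrK => /(_ isT isT).
have -> : r + (1 - r) = 1 by ring.
move=> /(_ erefl); rewrite mulr1 powR1 -powRrM mulfV ?gt_eqF// powRr1//.
move=> H; apply: (le_trans H); lra.
Qed.

Lemma bern2 r t : r < 0 -> 0 < t -> 1 + r * (t - 1) <= t `^ r.
Proof.
move=> r0 t0.
pose w := (1 - r)^-1.
have w0 : 0 < w by rewrite invr_gt0; lra.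
have w1 : w < 1 by rewrite invf_lt1; lra.
have ew : w * (1 - r) = 1 by rewrite /w mulVf //; lra.
have := @conjugate_powR R (t `^ (r * w)) (t `^ (1 - w)) (w^-1) ((1 - w)^-1)
  (powR_ge0 _ _) (powR_ge0 _ _).
have wi : 0 < w^-1 by rewrite invr_gt0.
have wi2 : 0 < (1-w)^-1 by rewrite invr_gt0 subr_gt0.
have e : w^-1^-1 + (1 - w)^-1^-1 = 1 by rewrite !invrK; ring.
move=> /(_ wi wi2 e).
rewrite -!powRrM mulfK ?gt_eqF// mulfV ?gt_eqF ?subr_gt0// (powRr1 (ltW t0)).
rewrite -powRD; last by rewrite (gt_eqF t0) implybT.
have -> : r * w + (1 - w) = 0.
  have -> : r * w + (1 - w) = 1 - w * (1 - r) by ring.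
  by rewrite ew subrr.
rewrite powRr0 !invrK => H.
set u := t `^ r in H *.
have : (1 - r) * 1 <= (1 - r) * (u * w + t * (1 - w)).
  by rewrite ler_pM2l; [exact: H| lra].
have -> : (1 - r) * (u * w + t * (1 - w)) = u * (w * (1 - r)) + t * (1 - r) - t * (w * (1-r)) by ring.
rewrite ew; lra.
Qed.
Lemma powRm1 r x : 0 < x -> x `^ (r - 1) = x `^ r / x.
Proof.
move=> x0; rewrite powRD; last by rewrite (gt_eqF x0) implybT.
by rewrite powR_inv1 // ltW.
Qed.

Lemma tanc r x y : 0 < r < 1 -> 0 < x -> 0 <= y ->
  y `^ r <= x `^ r + r * x `^ (r - 1) * (y - x).
Proof.
move=> hr x0 y0.
have -> : y = x * (y / x) by rewrite mulrC divfK ?gt_eqF.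
rewrite (powRM _ (ltW x0) (divr_ge0 y0 (ltW x0))).
have := bern1 r (y / x) hr (divr_ge0 y0 (ltW x0)).
rewrite powRm1 // => H.
have xr0 : 0 <= x `^ r by apply: powR_ge0.
have := ler_wpM2l xr0 H.
have -> : x `^ r * (1 + r * (y / x - 1)) = x `^ r + r * (x `^ r / x) * (x * (y / x) - x).
  field; rewrite gt_eqF //.
by [].
Qed.

Lemma tanv r x y : r < 0 -> 0 < x -> 0 < y ->
  x `^ r + r * x `^ (r - 1) * (y - x) <= y `^ r.
Proof.
move=> hr x0 y0.
have -> : y = x * (y / x) by rewrite mulrC divfK ?gt_eqF.
rewrite (powRM _ (ltW x0) (divr_ge0 (ltW y0) (ltW x0))).
have := bern2 r (y / x) hr (divr_gt0 y0 x0).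
rewrite powRm1 // => H.
have xr0 : 0 <= x `^ r by apply: powR_ge0.
have := ler_wpM2l xr0 H.
have -> : x `^ r * (1 + r * (y / x - 1)) = x `^ r + r * (x `^ r / x) * (x * (y / x) - x).
  field; rewrite gt_eqF //.
by [].
Qed.

Lemma decpow r x y : r < 0 -> 0 < x -> x <= y -> y `^ r <= x `^ r.
Proof.
move=> r0 x0 xy.
have y0 : 0 < y by apply: lt_le_trans xy.
have := tanv r y x r0 y0 x0.
have : 0 <= r * y `^ (r - 1) * (x - y).
  rewrite -mulrA; apply: mulr_le0; first exact: ltW.
  apply: mulr_ge0_le0; [exact: powR_ge0 | lra].
lra.
Qed.
Lemma errb (b a s : R) : 0 < b < 1 -> 0 < a -> a <= s <= a + 1 ->
  `| a `^ (1 - b) + (s - a) * ((a + 1) `^ (1 - b) - a `^ (1 - b)) - s `^ (1 - b) |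
  <= (1 - b) * b * a `^ (-1 - b) * (a + 1 - s).
Proof.
move=> /andP[b0 b1] a0 /andP[as1 as2].
have hr : 0 < 1 - b < 1 by apply/andP; split; lra.
have s0 : 0 < s by lra.
have bb0 : 0 < a + 1 by lra.
have T1 := tanc (1 - b) (a + 1) s hr bb0 (ltW s0).
have T2 := tanc (1 - b) a (a + 1) hr a0 (ltW bb0).
have T3 := tanc (1 - b) s (a + 1) hr s0 (ltW bb0).
have T4 := tanc (1 - b) (a + 1) a hr bb0 (ltW a0).
have hm : 1 - b - 1 < 0 by lra.
have M := decpow (1 - b - 1) a s hm a0 as1.
have nb : - b < 0 by lra.
have V := tanv (- b) a (a + 1) nb a0 bb0.
have e1 : 1 - b - 1 = - b by ring.
have e2 : - b - 1 = -1 - b by ring.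
rewrite e1 in T1 T2 T3 T4 M; rewrite e2 in V.
set P := a `^ (1 - b) in T2 T4 *.
set Q := (a + 1) `^ (1 - b) in T1 T2 T3 T4 *.
set S := s `^ (1 - b) in T1 T3 *.
set da := a `^ (- b) in T2 M V *.
set db := (a + 1) `^ (- b) in T1 T4 V *.
set ds := s `^ (- b) in T3 M *.
set K := a `^ (-1 - b) in V *.
set w := a + 1 - s.
have w0 : 0 <= w by rewrite /w; lra.
have w1 : w <= 1 by rewrite /w; lra.
have hs : s - a = 1 - w by rewrite /w; ring.
have hsb : s - (a + 1) = - w by rewrite /w; ring.
have hbs : a + 1 - s = w by [].
rewrite hsb in T1; rewrite hbs in T3.
have hab : a + 1 - a = 1 by ring.
have hba : a - (a + 1) = -1 by ring.
rewrite hab in T2 V; rewrite hba in T4.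
rewrite hs.
have al0 : 0 <= 1 - b by lra.
have Kb : da - db <= b * K by lra.
have dd : 0 <= da - db.
  have := decpow (- b) a (a + 1) nb a0 ltac:(lra) => //.
  rewrite -/da -/db; lra.
have up : S - (P + (1 - w) * (Q - P)) <= (1 - b) * (da - db) * w.
  have : w * (Q - P) <= w * ((1 - b) * da) by apply: ler_wpM2l => //; lra.
  nra.
have lo : - ((1 - b) * (da - db) * w) <= S - (P + (1 - w) * (Q - P)).
  have h1 : w * ((1 - b) * db) <= w * (Q - P) by apply: ler_wpM2l => //; lra.
  have h2 : (1 - b) * w * ds <= (1 - b) * w * da.
    by apply: ler_wpM2l => //; apply: mulr_ge0.
  nra.
have fin : (1 - b) * (da - db) * w <= (1 - b) * b * K * w.
  apply: ler_wpM2r => //; rewrite -mulrA; apply: ler_wpM2l => //.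
rewrite distrC ler_norml; apply/andP; split.
  apply: le_trans lo; rewrite lerN2; exact: fin.
exact: le_trans up fin.
Qed.
Lemma SA (b : R) (N : nat) : 0 < b < 1 ->
  \sum_(1 <= j < N.+2) (j%:R : R) `^ (-1 - b) <= 1 + b^-1 - (N.+1%:R : R) `^ (- b) / b.
Proof.
move=> /andP[b0 b1]; elim: N => [|N IH].
  rewrite big_nat1 !powR1 div1r; lra.
rewrite (big_nat_recr N.+2) //=.
have x0 : 0 < (N.+2%:R : R) by rewrite ltr0n.
have y0 : 0 < (N.+1%:R : R) by rewrite ltr0n.
have nb : - b < 0 by lra.
have V := tanv (- b) (N.+2%:R) (N.+1%:R) nb x0 y0.
have e : (N.+1%:R - N.+2%:R : R) = -1 by rewrite -[X in _ - X]natr1 -[in LHS]natr1; ring.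
have e2 : - b - 1 = -1 - b by ring.
rewrite e e2 in V.
set u := (N.+1%:R : R) `^ (- b) in IH V *.
set v := (N.+2%:R : R) `^ (- b) in V *.
set z := (N.+2%:R : R) `^ (-1 - b) in V *.
have : z <= (u - v) / b.
  rewrite ler_pdivlMr //; lra.
move=> hz.
have -> : 1 + b^-1 - v / b = 1 + b^-1 - u / b + (u - v) / b by rewrite mulrBl; ring.
exact: lerD.
Qed.

Lemma SB (b : R) (N : nat) : 0 < b < 1 ->
  \sum_(1 <= j < N.+1) (j%:R : R) `^ (b - 1) <= (N%:R : R) `^ b / b.
Proof.
move=> /andP[b0 b1]; elim: N => [|N IH].
  rewrite big_geq // powR0 ?mul0r //; lra.
rewrite (big_nat_recr N.+1) //=.
have x0 : 0 < (N.+1%:R : R) by rewrite ltr0n.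
have y0 : 0 <= (N%:R : R) by rewrite ler0n.
have hb : 0 < b < 1 by apply/andP.
have T := tanc b (N.+1%:R) (N%:R) hb x0 y0.
have e : (N%:R - N.+1%:R : R) = -1 by rewrite -[X in _ - X]natr1; ring.
rewrite e in T.
set u := (N%:R : R) `^ b in IH T *.
set v := (N.+1%:R : R) `^ b in T *.
set z := (N.+1%:R : R) `^ (b - 1) in T *.
have : z <= (v - u) / b.
  rewrite ler_pdivlMr //; lra.
move=> hz.
have -> : v / b = u / b + (v - u) / b by rewrite mulrBl; ring.
exact: lerD.
Qed.
Lemma halfb (r x : R) : -2 <= r <= 0 -> 0 < x -> (x / 2) `^ r <= 4 * x `^ r.
Proof.
move=> /andP[r2 r0] x0.
rewrite (@powRM _ x 2^-1 r (ltW x0)); last by rewrite invr_ge0 ler0n.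
rewrite mulrC.
apply: ler_wpM2r; first exact: powR_ge0.
rewrite -(powR_inv1 (ler0n R 2)) -powRrM.
have -> : (4 : R) = 2 `^ 2 by rewrite powR_mulrn // expr2; lra.
apply: ler_powR; [lra | nra].
Qed.
Lemma termb (b : R) (n j : nat) : 0 < b < 1 -> (1 <= j < n)%N ->
  ((n - j)%:R : R) `^ (b - 1) * (j%:R : R) `^ (-1 - b) <=
  4 * (n%:R : R) `^ (b - 1) * (j%:R : R) `^ (-1 - b) +
  4 * (n%:R : R) `^ (-1 - b) * ((n - j)%:R : R) `^ (b - 1).
Proof.
move=> /andP[b0 b1] /andP[j1 jn].
have n0 : 0 < (n%:R : R) by rewrite ltr0n; apply: leq_trans jn; apply: leq_trans j1 _.
have j0 : 0 < (j%:R : R) by rewrite ltr0n.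
have nj0 : 0 < ((n - j)%:R : R) by rewrite ltr0n subn_gt0.
have hA := powR_ge0 ((n - j)%:R : R) (b - 1).
have hB := powR_ge0 (j%:R : R) (-1 - b).
have hC := powR_ge0 (n%:R : R) (b - 1).
have hD := powR_ge0 (n%:R : R) (-1 - b).
case: (leqP (2 * j) n) => h2.
  have h : (n%:R : R) / 2 <= (n - j)%:R.
    rewrite ler_pdivrMr // -natrM ler_nat; lia.
  have d := decpow (b - 1) (n%:R / 2) ((n - j)%:R) ltac:(lra) ltac:(lra) h.
  have hh := halfb (b - 1) (n%:R) ltac:(apply/andP; split; lra) n0.
  have : ((n - j)%:R : R) `^ (b - 1) * (j%:R : R) `^ (-1 - b) <=
         4 * (n%:R : R) `^ (b - 1) * (j%:R : R) `^ (-1 - b).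
    apply: ler_wpM2r => //; lra.
  have : 0 <= 4 * (n%:R : R) `^ (-1 - b) * ((n - j)%:R : R) `^ (b - 1).
    by rewrite !mulr_ge0.
  lra.
have h : (n%:R : R) / 2 <= j%:R.
  rewrite ler_pdivrMr // -natrM ler_nat; lia.
have d := decpow (-1 - b) (n%:R / 2) (j%:R) ltac:(lra) ltac:(lra) h.
have hh := halfb (-1 - b) (n%:R) ltac:(apply/andP; split; lra) n0.
have : ((n - j)%:R : R) `^ (b - 1) * (j%:R : R) `^ (-1 - b) <=
       4 * (n%:R : R) `^ (-1 - b) * ((n - j)%:R : R) `^ (b - 1).
  rewrite mulrC; apply: ler_wpM2r => //; lra.
have : 0 <= 4 * (n%:R : R) `^ (b - 1) * (j%:R : R) `^ (-1 - b).
  by rewrite !mulr_ge0.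
lra.
Qed.
Definition G (b : R) (n j : nat) : R :=
  if j == 0%N then (n%:R : R) `^ (b - 1)
  else if j == n then (1 - b) * b * (n%:R : R) `^ (-1 - b)
  else ((n - j)%:R : R) `^ (b - 1) * ((1 - b) * b * (j%:R : R) `^ (-1 - b)).

Lemma G_ge0 b n j : 0 < b < 1 -> 0 <= G b n j.
Proof.
move=> /andP[b0 b1]; rewrite /G.
have hab : 0 <= (1 - b) * b by apply: mulr_ge0; lra.
case: ifP => _; first exact: powR_ge0.
case: ifP => _; first by apply: mulr_ge0 => //; apply: powR_ge0.
apply: mulr_ge0; first exact: powR_ge0.
by apply: mulr_ge0 => //; apply: powR_ge0.
Qed.

Lemma S1b (b : R) (n : nat) : 0 < b < 1 ->
  \sum_(1 <= j < n) (j%:R : R) `^ (-1 - b) <= 1 + b^-1.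
Proof.
move=> hb; have b0 : 0 < b by case/andP: hb.
case: n => [|[|N]]; try by rewrite big_geq //; rewrite addr_ge0 // ?invr_ge0 ltW.
apply: le_trans (SA b N hb) _.
have : 0 <= (N.+1%:R : R) `^ (- b) / b by rewrite divr_ge0 ?powR_ge0 ?ltW.
lra.
Qed.

Lemma S2b (b : R) (n : nat) : 0 < b < 1 -> (1 <= n)%N ->
  \sum_(1 <= j < n) ((n - j)%:R : R) `^ (b - 1) <= (n%:R : R) `^ b / b.
Proof.
move=> hb n1; have b0 : 0 < b by case/andP: hb.
rewrite big_nat_rev /=.
rewrite (eq_big_nat _ _ (F2 := fun i => (i%:R : R) `^ (b - 1))); last first.
  move=> i /andP[i1 iN]; congr (_ `^ _); congr (_%:R); lia.
case: n n1 => // N _.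
apply: le_trans (SB b N hb) _.
apply: ler_wpM2r; first by rewrite invr_ge0 ltW.
apply: ge0_ler_powR; rewrite ?nnegrE ?ler0n ?ler_nat //; lra.
Qed.
Lemma sumG (b : R) (n : nat) : 0 < b < 1 -> (1 <= n)%N ->
  \sum_(0 <= j < n.+1) G b n j <= 14 * (n%:R : R) `^ (b - 1).
Proof.
move=> hb n1; have /andP[b0 b1] := hb.
rewrite big_nat_recr // big_ltn //=.
have -> : G b n 0 = (n%:R : R) `^ (b - 1) by [].
have -> : G b n n = (1 - b) * b * (n%:R : R) `^ (-1 - b).
  by rewrite /G eqxx; case: n n1.
set P := (n%:R : R) `^ (b - 1).
set Q := (n%:R : R) `^ (-1 - b).
have n0 : 0 < (n%:R : R) by rewrite ltr0n.
have hab0 : 0 <= (1 - b) * b by apply: mulr_ge0; lra.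
have hab1 : (1 - b) * b <= 1 by nra.
have QP : Q <= P by apply: ler_powR; rewrite ?ler1n //; lra.
have QnP : Q * (n%:R : R) `^ b <= P.
  rewrite /Q -powRD; last by rewrite (gt_eqF n0) implybT.
  by apply: ler_powR; rewrite ?ler1n //; lra.
have P0 : 0 <= P by apply: powR_ge0.
have Q0 : 0 <= Q by apply: powR_ge0.
have Nb0 : 0 <= (n%:R : R) `^ b by apply: powR_ge0.
have mid : \sum_(1 <= j < n) G b n j <=
   (1 - b) * b * (4 * P * (1 + b^-1) + 4 * Q * ((n%:R : R) `^ b / b)).
  apply: (@le_trans _ _ (\sum_(1 <= j < n) ((1 - b) * b *
      (4 * P * (j%:R : R) `^ (-1 - b) + 4 * Q * ((n - j)%:R : R) `^ (b - 1))))).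
    apply: ler_sum_nat => j /andP[j1 jn].
    rewrite /G; have -> : (j == 0%N) = false by apply/negbTE; rewrite -lt0n.
    have -> : (j == n) = false by apply/negbTE; rewrite neq_ltn jn.
    have T := termb b n j hb (introT andP (conj j1 jn)).
    rewrite mulrCA; apply: ler_wpM2l => //.
  rewrite -mulr_sumr; apply: ler_wpM2l => //.
  rewrite big_split /= -!mulr_sumr lerD //.
    apply: ler_wpM2l; first by rewrite mulr_ge0.
    exact: S1b.
  apply: ler_wpM2l; first by rewrite mulr_ge0.
  exact: S2b.
have e1 : (1 - b) * b * (4 * P * (1 + b^-1)) = 4 * (1 - b) * (b + 1) * P.
  by field; rewrite gt_eqF.
have e2 : (1 - b) * b * (4 * Q * ((n%:R : R) `^ b / b)) = 4 * (1 - b) * (Q * (n%:R : R) `^ b).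
  by field; rewrite gt_eqF.
rewrite mulrDr e1 e2 in mid.
have h1 : 4 * (1 - b) * (b + 1) * P <= 8 * P by apply: ler_wpM2r => //; nra.
have h2 : 4 * (1 - b) * (Q * (n%:R : R) `^ b) <= 4 * P.
  have : 4 * (1 - b) * (Q * (n%:R : R) `^ b) <= 4 * (Q * (n%:R : R) `^ b).
    by apply: ler_wpM2r; [apply: mulr_ge0 | lra].
  lra.
have h3 : (1 - b) * b * Q <= P by nra.
lra.
Qed.
Lemma Hb (b s : R) (n m : nat) : 0 < b < 1 -> (1 <= n)%N -> (m <= n)%N ->
  m%:R <= s < m%:R + 1 ->
  (n%:R + 1 - s) `^ (b - 1) *
  `| (m%:R : R) `^ (1 - b) + (s - m%:R) * ((m%:R + 1) `^ (1 - b) - (m%:R : R) `^ (1 - b))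
     - s `^ (1 - b) | <= G b n m.
Proof.
move=> hb n1 mn /andP[ms sm]; have /andP[b0 b1] := hb.
have n0 : 0 < (n%:R : R) by rewrite ltr0n.
have hab0 : 0 <= (1 - b) * b by apply: mulr_ge0; lra.
have mR : (m%:R : R) <= n%:R by rewrite ler_nat.
have w0 : 0 < n%:R + 1 - s by lra.
rewrite /G; case: eqP => [m0|/eqP m0].
  subst m; rewrite powR0 ?add0r ?powR1 ?subr0 ?mulr1; last by apply/eqP; lra.
  have hs : 0 <= s by move: ms; rewrite /=.
  have : `|s - s `^ (1 - b)| <= 1.
    have sa : s `^ (1 - b) <= 1.
      apply: (@le_trans _ _ (1 `^ (1 - b))); last by rewrite powR1.
      apply: ge0_ler_powR; rewrite ?nnegrE; lra.
    have := powR_ge0 s (1 - b).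
    move=> hp; rewrite ler_norml; apply/andP; split; lra.
  move=> H1.
  have H2 : (n%:R + 1 - s) `^ (b - 1) <= (n%:R : R) `^ (b - 1).
    apply: decpow => //; lra.
  rewrite -[X in _ <= X]mulr1; apply: ler_pM => //; exact: powR_ge0.
have m1 : 0 < (m%:R : R) by rewrite ltr0n lt0n.
have E := errb b (m%:R) s hb m1 (introT andP (conj ms (ltW sm))).
case: eqP => [mn'|/eqP mn'].
  subst m.
  have e : n%:R + 1 - s = (n%:R : R) + 1 - s by [].
  apply: (@le_trans _ _ ((n%:R + 1 - s) `^ (b - 1) *
     ((1 - b) * b * (n%:R : R) `^ (-1 - b) * (n%:R + 1 - s)))).
    apply: ler_wpM2l => //; exact: powR_ge0.
  rewrite mulrCA [_ `^ _ * _]mulrC mulr_powRB1; [|lra|lra].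
  rewrite -[X in _ <= X]mulr1; apply: ler_wpM2l.
    by apply: mulr_ge0 => //; apply: powR_ge0.
  apply: (@le_trans _ _ (1 `^ b)); last by rewrite powR1.
  apply: ge0_ler_powR; rewrite ?nnegrE; lra.
have mlt : (m < n)%N by rewrite ltn_neqAle mn' mn.
have nm0 : 0 < ((n - m)%:R : R) by rewrite ltr0n subn_gt0.
have enm : ((n - m)%:R : R) = n%:R - m%:R by rewrite natrB.
apply: ler_pM.
- exact: powR_ge0.
- exact: normr_ge0.
- apply: decpow => //; lra.
apply: (le_trans E).
rewrite -[X in _ <= X]mulr1; apply: ler_wpM2l.
  by apply: mulr_ge0 => //; apply: powR_ge0.
lra.
Qed.
End S.
Arguments G {R}.
Arguments G_ge0 {R}.
Arguments Hb {R}.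
Arguments sumG {R}.

Section M.
Local Open Scope ereal_scope.
Context d (T : measurableType d) (R : realType).
Variable mu : {measure set T -> \bar R}.

Lemma le_int_nn (D : set T) (f g : T -> \bar R) :
  (forall x, D x -> 0 <= f x) -> (forall x, D x -> f x <= g x) ->
  \int[mu]_(x in D) f x <= \int[mu]_(x in D) g x.
Proof.
move=> f0 fg.
have g0 : forall x, D x -> 0 <= g x by move=> x Dx; exact: le_trans (f0 _ Dx) (fg _ Dx).
rewrite (integral_mkcond D f) (integral_mkcond D g).
have pf : forall x, 0 <= (f \_ D) x.
  by move=> x; rewrite /patch; case: ifP => // /set_mem /f0.
have pg : forall x, 0 <= (g \_ D) x.
  by move=> x; rewrite /patch; case: ifP => // /set_mem /g0.
rewrite (ge0_integralTE _ pf) (ge0_integralTE _ pg).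
apply: le_ereal_sup => _ [h hf <-]; exists h => // x.
apply: le_trans (hf x) _.
by rewrite /patch; case: ifP => // /set_mem /fg.
Qed.
End M.

Section L.
Variable R : realType.
Local Open Scope ereal_scope.

Lemma int_step (D : set R) (mD : measurable D) (n : nat) (c a b : nat -> R) :
  (forall j, (0 <= c j)%R) -> (forall j, (a j <= b j)%R) ->
  \int[lebesgue_measure]_(x in D) (\sum_(j < n) c j * \1_(`[a j, b j[%classic) x)%:E
  <= (\sum_(j < n) c j * (b j - a j))%:E.
Proof.
move=> c0 ab.
under eq_integral do rewrite -sumEFin.
rewrite ge0_integral_sum //; last first.
  move=> j x _; rewrite lee_fin; apply: mulr_ge0 => //; by rewrite indicE ler0n.
  move=> j; apply/measurable_realfun.measurable_EFinP; apply: measurable_realfun.measurable_funM.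
    exact: measurable_cst.
  exact: measurable_realfun.measurable_indic.
rewrite -sumEFin; apply: lee_sum => j _.
have H := @integralZl_indic _ _ _ lebesgue_measure _ mD (fun=> `[a j, b j[%classic) (c j).
cbv beta in H; rewrite H //; last first.
  by move=> cj; have := c0 j; rewrite leNgt cj.
rewrite integral_indic //= EFinM; apply: lee_wpmul2l; first by rewrite lee_fin.
apply: (@le_trans _ _ (lebesgue_measure (`[a j, b j[%classic : set R))).
  by apply: measureIl.
rewrite lebesgue_measure_itv /=; case: ifP => _.
  by rewrite -EFinD.
by rewrite lee_fin subr_ge0.
Qed.
End L.

Section P.
Variable R : realType.

Lemma PW (b kappa tau : R) (n : nat) : 0 < b < 1 -> 0 < kappa -> (1 <= n)%N ->
  0 <= tau <= node kappa n.+1 ->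
  (node kappa n.+1 - tau) `^ (b - 1)
    * `| interp1 kappa (fun s => s `^ (1 - b)) tau - tau `^ (1 - b) |
  <= \sum_(j < n.+1) G b n j * \1_(`[j%:R * kappa, j.+1%:R * kappa[%classic) tau.
Proof.
move=> hb k0 n1 /andP[t0 tT]; have /andP[b0 b1] := hb.
have sum0 : forall j, 0 <= G b n j * \1_(`[j%:R * kappa, j.+1%:R * kappa[%classic) tau.
  by move=> j; apply: mulr_ge0; [exact: G_ge0 | by rewrite indicE ler0n].
have [->|tlt] := eqVneq tau (node kappa n.+1).
  rewrite subrr powR0; last by apply/eqP; lra.
  rewrite mul0r; apply: sumr_ge0 => j _; apply: mulr_ge0; [exact: G_ge0 | by rewrite indicE ler0n].
have tT' : tau < node kappa n.+1 by rewrite lt_neqAle tlt tT.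
set s := tau / kappa.
have et : tau = s * kappa by rewrite /s divfK // gt_eqF.
have s0 : 0 <= s by rewrite /s divr_ge0 // ltW.
have sn : s < n%:R + 1.
  by rewrite /s ltr_pdivrMr // natr1; move: tT'; rewrite /node.
have fge : (0 <= Num.floor s)%R by rewrite floor_ge_int.
set m := `|Num.floor s|%N.
have fm : Num.floor s = m%:Z by rewrite /m gez0_abs.
have ms : (m%:R : R) <= s.
  have := floor_le s; rewrite fm; by [].
have sm : s < m%:R + 1.
  have := floorD1_gt s; rewrite fm intrD; by [].
have mn : (m <= n)%N.
  rewrite -ltnS -(ltr_nat R) -natr1; lra.
rewrite (bigD1 (Ordinal (mn : (m < n.+1)%N))) //=.
have -> : \1_(`[m%:R * kappa, m.+1%:R * kappa[%classic) tau = 1 :> R.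
  rewrite indicE mem_set //= in_itv /= -natr1; apply/andP; split.
    by rewrite et ler_pM2r.
  by rewrite et ltr_pM2r.
rewrite mulr1; set rest := (X in _ <= _ + X).
have r0 : 0 <= rest by apply: sumr_ge0 => j _; exact: sum0.
apply: (@le_trans _ _ (G b n m)); last by rewrite lerDl.
have Hm := Hb b s n m hb n1 mn (introT andP (conj ms sm)).
apply: le_trans Hm; rewrite le_eqVlt; apply/orP; left; apply/eqP.
rewrite /interp1 -/s fm.
have -> : ((m%:Z)%:~R : R) = m%:R by [].
set al := 1 - b.
have kal := powR_ge0 kappa al.
have e1 : (m%:R * kappa) `^ al = (m%:R : R) `^ al * kappa `^ al.
  by rewrite powRM // ltW.
have e2 : (m%:R * kappa + kappa) `^ al = (m%:R + 1) `^ al * kappa `^ al.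
  rewrite (_ : m%:R * kappa + kappa = (m%:R + 1) * kappa); last by ring.
  by rewrite powRM // ?ltW // addr_ge0.
have e3 : tau `^ al = s `^ al * kappa `^ al by rewrite et powRM // ltW.
have e4 : (tau - m%:R * kappa) / kappa = s - m%:R.
  by rewrite et -mulrBl mulfK // gt_eqF.
have e5 : node kappa n.+1 - tau = (n%:R + 1 - s) * kappa.
  by rewrite /node -natr1 et; ring.
have e6 : (node kappa n.+1 - tau) `^ (b - 1) = (n%:R + 1 - s) `^ (b - 1) * kappa `^ (b - 1).
  by rewrite e5 powRM //; lra.
rewrite e1 e2 e3 e4 e6.
set X := (m%:R : R) `^ al + (s - m%:R) * ((m%:R + 1) `^ al - (m%:R : R) `^ al) - s `^ al.
have eX : (m%:R : R) `^ al * kappa `^ al + (s - m%:R) * ((m%:R + 1) `^ al * kappa `^ al -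
    (m%:R : R) `^ al * kappa `^ al) - s `^ al * kappa `^ al = kappa `^ al * X.
  by rewrite /X; ring.
rewrite eX normrM (ger0_norm kal).
have kk : kappa `^ (b - 1) * kappa `^ al = 1.
  rewrite -powRD; last by rewrite (gt_eqF k0) implybT.
  by rewrite /al (_ : b - 1 + (1 - b) = 0) ?powRr0 //; ring.
have -> : forall P K1 K2 Y : R, P * K1 * (K2 * Y) = P * Y * (K1 * K2) by move=> *; ring.
by rewrite kk mulr1.
Qed.
End P.

Theorem lemma5p5 (R : realType) (beta : R) (hb0 : 0 < beta) (hb1 : beta < 1) :
  exists C : R, forall (kappa : R), 0 < kappa -> forall n : nat, (1 <= n)%N ->
    (\int[lebesgue_measure]_(tau in `[0%R, (node kappa n.+1)%R])
        ((node kappa n.+1 - tau) `^ (beta - 1)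
         * `| interp1 kappa (fun s => s `^ (1 - beta)) tau - tau `^ (1 - beta) |)%:E
     <= (C * kappa `^ (2 - beta) * (node kappa n.+1 - kappa) `^ (beta - 1))%:E)%E.
Proof.
have hb : 0 < beta < 1 by rewrite hb0 hb1.
exists 14 => kappa k0 n n1.
apply: (le_trans (le_int_nn _ _ _ lebesgue_measure _ _
   (fun tau => (\sum_(j < n.+1) G beta n j * \1_(`[j%:R * kappa, j.+1%:R * kappa[%classic) tau)%:E)
   _ _)).
- move=> x _; rewrite lee_fin; apply: mulr_ge0; [exact: powR_ge0 | exact: normr_ge0].
- move=> x; rewrite /= in_itv /= => hx; rewrite lee_fin; exact: PW.
apply: le_trans (@int_step R _ (measurable_itv _) n.+1 (G beta n)
   (fun j => j%:R * kappa) (fun j => j.+1%:R * kappa) _ _) _.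
- move=> j; exact: G_ge0.
- move=> j; rewrite ler_pM2r // ler_nat; exact: leqnSn.
rewrite lee_fin.
have ek : forall j : nat, (j.+1%:R * kappa - j%:R * kappa) = kappa.
  by move=> j; rewrite -natr1; ring.
under eq_bigr do rewrite ek.
rewrite -mulr_suml -(big_mkord xpredT (G beta n)).
have S := sumG beta n hb n1.
have n0 : 0 < (n%:R : R) by rewrite ltr0n.
have eT : node kappa n.+1 - kappa = n%:R * kappa by rewrite /node -natr1; ring.
rewrite eT (powRM _ (ler0n _ n) (ltW k0)).
have kk : kappa `^ (2 - beta) * kappa `^ (beta - 1) = kappa.
  rewrite -powRD; last by rewrite (gt_eqF k0) implybT.
  by rewrite (_ : 2 - beta + (beta - 1) = 1) ?powRr1 ?ltW //; ring.
rewrite (_ : 14 * kappa `^ (2 - beta) * ((n%:R) `^ (beta - 1) * kappa `^ (beta - 1))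
   = 14 * (n%:R) `^ (beta - 1) * (kappa `^ (2 - beta) * kappa `^ (beta - 1))); last by ring.
rewrite kk; apply: ler_wpM2r => //; exact: ltW.
Qed.
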